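(* Assume the setting below, and assume moreover that $Q$ is finite. Let $(\alpha,\beta)\in\mathcal{S}^2$ be shrinking and let $\gamma\in\Gamma_1^{\alpha,\beta}$. Then for all sufficiently large $k\in\mathbb{N}$ there is some $m\in\mathbb{N}$ such that $\gamma^m$ fixes every vertex of level $k$ of $\mathcal{T}_1$ and $\gamma^m|_v\in\tilde G^\beta_{[k+1]}$ for all vertices $v$ of level $k$ in $\mathcal{T}_1$.
   Context: Setting: $Q,G$ are groups and $X=(X_n)_{n\in\mathbb{N}}$ is a sequence of finite sets with $|X_n|\ge2$, each with actions of $Q$ and $G$; $Q_n,G_n\subseteq\mathrm{Sym}(X_n)$ are the images and $A_n=\langle Q_n,G_n\rangle$. Assume for all $n$: (A1) $G,Q$ finitely generated; (A2) $Q$ perfect; (A3) $A_n$ is transitive on $X_n$ and generated by the $G_n$-conjugates of $Q_n$. $\mathcal{T}_j$ is the rooted tree of finite words $x_j\cdots x_k$ ($x_i\in X_i$), $\mathrm{Aut}(\mathcal{T}_j)$ its root-fixing automorphisms; sections $h|_u\in\mathrm{Aut}(\mathcal{T}_{j+\ell})$ (for $u$ of level $\ell$) are defined by $h(uv)=h(u)h|_u(v)$. $A_j$ acts by rooted automorphisms $a\cdot x_jx_{j+1}\cdots x_k=(ax_j)x_{j+1}\cdots x_k$ and is identified with its image; $q_j,g_j$ denote images of $q\in Q,g\in G$ in $A_j$. A point $o\in X_i$ is fixed in each $X_i$; $\mathcal{S}=\prod_{i\ge1}(X_i\setminus\{o\})$. For $\alpha\in\mathcal{S}$, $q\in Q$,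 $\tilde q^\alpha_{[j]}\in\mathrm{Aut}(\mathcal{T}_j)$ acts trivially on the first level with section at $x\in X_j$ equal to $\tilde q^\alpha_{[j+1]}$ if $x=o$, $q_{j+1}$ if $x=\alpha_j$, identity otherwise; analogously $\tilde g^\beta_{[j]}$ for $\beta\in\mathcal{S}$, $g\in G$. $\tilde Q^\alpha_{[j]},\tilde G^\beta_{[j]}$ are the sets of these elements, $\Gamma_j^{\alpha,\beta}=\langle A_j,\tilde Q^\alpha_{[j]},\tilde G^\beta_{[j]}\rangle$, and $\tilde B^{\alpha,\beta}_j=\tilde Q^\alpha_{[j]}\tilde G^\beta_{[j]}$. Stabilized sections: for $g\in\mathrm{Aut}(\mathcal{T}_j)$ and a vertex $u$, let $\ell_u(g)$ be the length of the orbit of $u$ under $\langle g\rangle$ and $g\Vert_u=g^{\ell_u(g)}|_u$. A pair $(\alpha,\beta)\in\mathcal{S}^2$ is shrinking if $\alpha_j\ne\beta_j$ for all $j$ and for each $\gamma\in\Gamma_1^{\alpha,\beta}$ there is $k\in\mathbb{N}$ such that for every vertex $x$ of level $k$ of $\mathcal{T}_1$, $\gamma\Vert_x$ lies in $\tilde B^{\alpha,\beta}_{k+1}$ or in $A_{k+1}$. *)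

(* Defs.v *)
From mathcomp Require Import all_boot all_fingroup.
From mathcomp Require Import boolp.
Set Implicit Arguments.
Unset Strict Implicit.
Unset Printing Implicit Defensive.
Local Open Scope group_scope.

Section RootedTree.
(* The alphabets: X n for n >= 1 (X 0 is never used). *)
Variable X : nat -> finType.

Definition letter := {n : nat & X n}.

(* [vertex j w] : w = x_j x_{j+1} ... x_k is a vertex of the tree T_j
   (its level is size w). *)
Fixpoint vertex (j : nat) (w : seq letter) : bool :=
  match w with
  | [::] => true
  | x :: w' => (tag x == j) && vertex j.+1 w'
  end.

(* Tree maps are represented as functions on words; only their behaviour on
   vertices of the relevant tree matters (see aut_eq). *)
Definition aut_eq (j : nat) (h h' : seq letter -> seq letter) : Prop :=
  forall w, vertex j w -> h w = h' w.

Definition is_aut (j : nat) (h : seq letter -> seq letter) : Prop :=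
  [/\ forall w, vertex j w -> vertex j (h w),
      forall w, vertex j w -> size (h w) = size w,
      forall w n, vertex j w -> h (take n w) = take n (h w),
      forall w w', vertex j w -> vertex j w' -> h w = h w' -> w = w'
    & forall v, vertex j v -> exists2 w, vertex j w & h w = v].

(* Subgroup of Aut(T_j) generated by a set S of automorphisms of T_j:
   all finite products of elements of S and their inverses (up to equality
   on the vertices of T_j). *)
Inductive gen_aut (j : nat) (S : (seq letter -> seq letter) -> Prop) :
    (seq letter -> seq letter) -> Prop :=
  | GA_id : gen_aut j S id
  | GA_mul s h : S s -> gen_aut j S h -> gen_aut j S (s \o h)
  | GA_mulV s s' h : S s -> is_aut j s' -> aut_eq j (s \o s') id ->
      gen_aut j S h -> gen_aut j S (s' \o h)
  | GA_eq h h' : gen_aut j S h -> aut_eq j h h' -> gen_aut j S h'.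

(* Section h|_u : h(uv) = h(u) h|_u(v). *)
Definition sect (h : seq letter -> seq letter) (u : seq letter) :
    seq letter -> seq letter :=
  fun v => drop (size u) (h (u ++ v)).

Definition autpow (h : seq letter -> seq letter) (m : nat) :
    seq letter -> seq letter := fun w => iter m h w.

Definition orbit_len (h : seq letter -> seq letter) (u : seq letter) (n : nat)
    : Prop :=
  [/\ 0 < n, iter n h u = u & forall m, 0 < m < n -> iter m h u <> u].

Definition lett_act (rho : forall n, {perm X n}) (x : letter) : letter :=
  Tagged X (rho (tag x) (tagged x)).

Definition permL (j : nat) (a : {perm X j}) (x : letter) : letter :=
  match tag x =P j with
  | ReflectT e => Tagged X (a (eq_rect (tag x) X (tagged x) j e))
  | ReflectF _ => x
  end.

Definition rooted (j : nat) (a : {perm X j}) (w : seq letter) : seq letter :=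
  if w is x :: w' then permL a x :: w' else w.

(* The element \tilde{r}^delta_{[j]} for a family rho (rho_n = image of r in
   Sym(X_n)) and delta in S: trivial on level 1, section at o is
   \tilde{r}^delta_{[j+1]}, section at delta_j is r_{j+1}, identity elsewhere. *)
Fixpoint tilde (rho : forall n, {perm X n}) (o delta : forall n, X n)
    (j : nat) (w : seq letter) {struct w} : seq letter :=
  match w with
  | [::] => [::]
  | x :: w' =>
      if x == Tagged X (o j) then x :: tilde rho o delta j.+1 w'
      else if x == Tagged X (delta j) then
        x :: (if w' is y :: w'' then lett_act rho y :: w'' else w')
      else x :: w'
  end.

End RootedTree.

Section Setting.
Variables (X : nat -> finType) (Q : finGroupType) (G : groupType).
Variables (qa : forall n, Q -> {perm X n}) (ga : forall n, G -> {perm X n}).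

Definition Qn (n : nat) : {set {perm X n}} := qa n @: [set: Q].
Definition Gn (n : nat) : {set {perm X n}} :=
  [set p | `[< exists g : G, ga n g = p >] ].
Definition An (n : nat) : {set {perm X n}} := <<Qn n :|: Gn n>>.

Inductive gen_grp (S : G -> Prop) : G -> Prop :=
  | GG_one : gen_grp S 1
  | GG_mul s g : S s -> gen_grp S g -> gen_grp S (s * g)
  | GG_mulV s g : S s -> gen_grp S g -> gen_grp S (s^-1 * g).

Definition fin_gen_G : Prop :=
  exists gs : seq G, forall g, gen_grp (fun s => s \in gs) g.

(* The standing assumptions of the setting (for all levels n >= 1):
   |X_n| >= 2; Q and G act on X_n (group homomorphisms into Sym(X_n));
   (A1) G finitely generated (Q is a finite group, hence finitely generated);
   (A2) Q perfect;
   (A3) A_n transitive on X_n and generated by the G_n-conjugates of Q_n. *)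
Definition setting : Prop :=
  (forall n, 0 < n -> 1 < #|X n|) /\
  (forall n, 0 < n -> forall x y : Q, qa n (x * y) = qa n x * qa n y) /\
  (forall n, 0 < n -> forall x y : G, ga n (x * y) = ga n x * ga n y) /\
  fin_gen_G /\
  [~: [set: Q], [set: Q]] = [set: Q] /\
  (forall n, 0 < n -> [transitive An n, on [set: X n] | 'P]) /\
  (forall n, 0 < n -> An n = <<class_support (Qn n) (Gn n)>>).

Variable o : forall n, X n.

Definition inS (alpha : forall n, X n) : Prop := forall n, 0 < n -> alpha n != o n.

Definition Qtil (alpha : forall n, X n) (j : nat) (q : Q) :=
  tilde (fun n => qa n q) o alpha j.
Definition Gtil (beta : forall n, X n) (j : nat) (g : G) :=
  tilde (fun n => ga n g) o beta j.

Definition Gamma1 (alpha beta : forall n, X n) (gamma : seq (letter X) -> seq (letter X)) :=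
  gen_aut 1 (fun s => (exists2 a, a \in An 1 & s = rooted a)
                      \/ (exists q, s = Qtil alpha 1 q)
                      \/ (exists g, s = Gtil beta 1 g)) gamma.

Definition inB (alpha beta : forall n, X n) (j : nat) h :=
  exists q g, aut_eq j h (Qtil alpha j q \o Gtil beta j g).
Definition inA (j : nat) h := exists2 a, a \in An j & aut_eq j h (rooted a).
Definition inGtil (beta : forall n, X n) (j : nat) h :=
  exists g, aut_eq j h (Gtil beta j g).

Definition shrinking (alpha beta : forall n, X n) : Prop :=
  (forall j, 0 < j -> alpha j != beta j) /\
  forall gamma, Gamma1 alpha beta gamma ->
    exists k, 0 < k /\
      forall x n, vertex 1 x -> size x = k -> orbit_len gamma x n ->
        inB alpha beta k.+1 (sect (autpow gamma n) x)
        \/ inA k.+1 (sect (autpow gamma n) x).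

End Setting.

(* Main.v *)
Require Import Defs.
From mathcomp Require Import all_boot all_fingroup.
From mathcomp Require Import boolp.
From mathcomp Require Import all_solvable.
From mathcomp Require Import zify.
Set Implicit Arguments.
Unset Strict Implicit.
Unset Printing Implicit Defensive.
Local Open Scope group_scope.


Section Tree.
Variable X : nat -> finType.
Local Notation L := (letter X).

Lemma vertex_cat j (u v : seq L) : vertex j (u ++ v) = vertex j u && vertex (j + size u) v.
Proof.
elim: u j => [|x u IH] j /=; first by rewrite addn0.
by rewrite IH addSnnS andbA.
Qed.

Lemma vertex_take j n (w : seq L) : vertex j w -> vertex j (take n w).
Proof. by elim: w j n => [|x w IH] j [|n] //= /andP[-> /IH ->]. Qed.

Lemma vertex_cons j (x : L) w : vertex j (x :: w) -> exists y : X j, x = Tagged X y.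
Proof. by case: x => n y /andP[/eqP /= e _]; subst; exists y. Qed.

Lemma tagged_eq n (y y' : X n) : (Tagged X y == Tagged X y') = (y == y').
Proof. by rewrite eq_Tagged. Qed.

Definition good j (h : seq L -> seq L) :=
  [/\ forall w, vertex j w -> vertex j (h w),
      forall w, vertex j w -> size (h w) = size w,
      forall w n, vertex j w -> h (take n w) = take n (h w)
    & forall w w', vertex j w -> vertex j w' -> h w = h w' -> w = w'].

Lemma is_aut_good j h : is_aut j h -> good j h.
Proof. by case. Qed.

Lemma good_id j : good j id.
Proof. by split. Qed.

Lemma good_comp j f h : good j f -> good j h -> good j (f \o h).
Proof.
case=> fv fs ft fi [hv hs ht hi]; split=> /=.
- by move=> w Hw; apply/fv/hv.
- by move=> w Hw; rewrite fs ?hs //; apply: hv.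
- by move=> w n Hw; rewrite ht // ft //; apply: hv.
- by move=> w w' Hw Hw' /fi E; apply: hi => //; apply: E; apply: hv.
Qed.

Lemma good_eq j h h' : good j h -> aut_eq j h h' -> good j h'.
Proof.
case=> hv hs ht hi E; split.
- by move=> w Hw; rewrite -E //; apply: hv.
- by move=> w Hw; rewrite -E //; apply: hs.
- by move=> w n Hw; rewrite -!E ?ht //; apply: vertex_take.
- by move=> w w' Hw Hw'; rewrite -!E //; apply: hi.
Qed.

Lemma gen_good j S h : (forall s, S s -> good j s) -> gen_aut j S h -> good j h.
Proof.
move=> HS; elim=> {h} [|s h Ss _ IH|s s' h Ss As' _ _ IH|h h' _ IH E].
- exact: good_id.
- by apply: good_comp => //; apply: HS.
- by apply: good_comp => //; apply: is_aut_good.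
- exact: good_eq E.
Qed.

Lemma good_iter j h r : good j h -> good j (iter r h).
Proof.
move=> Hh; elim: r => [|r IH]; first exact: good_id.
exact: (good_comp Hh IH).
Qed.

Lemma good_cat j h (u v : seq L) : good j h -> vertex j u -> vertex (j + size u) v ->
  h (u ++ v) = h u ++ sect h u v.
Proof.
case=> hv hs ht hi Hu Hv.
have Huv : vertex j (u ++ v) by rewrite vertex_cat Hu.
by rewrite /sect -{1}(cat_take_drop (size u) (h (u ++ v))) -ht // take_size_cat.
Qed.

Lemma good_sect_vertex j h (u v : seq L) : good j h -> vertex j u -> vertex (j + size u) v ->
  vertex (j + size u) (sect h u v).
Proof.
move=> Hh Hu Hv; have Huv : vertex j (u ++ v) by rewrite vertex_cat Hu.
case: (Hh) => hv hs _ _.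
by have := hv _ Huv; rewrite (good_cat Hh) // vertex_cat hs // => /andP[].
Qed.

Lemma iter_fix_cat j h (u : seq L) r v : good j h -> vertex j u -> h u = u ->
  vertex (j + size u) v ->
  iter r h (u ++ v) = u ++ iter r (sect h u) v /\ vertex (j + size u) (iter r (sect h u) v).
Proof.
move=> Hh Hu Hf Hv; elim: r => [|r [IH1 IH2]] //=.
split; first by rewrite IH1 (good_cat Hh) // Hf.
exact: good_sect_vertex.
Qed.

Lemma iter_eqv j (f g : seq L -> seq L) r w : (forall w, vertex j w -> vertex j (f w)) ->
  aut_eq j f g -> vertex j w -> iter r f w = iter r g w.
Proof.
move=> Hf E Hw.
suff : iter r f w = iter r g w /\ vertex j (iter r f w) by case.
elim: r => [|r [IH1 IH2]] //=; split; last exact: Hf.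
by rewrite E // IH1.
Qed.

Lemma sect_cat h (x u w : seq L) : sect h (x ++ u) w = sect (sect h x) u w.
Proof. by rewrite /sect -catA drop_drop size_cat addnC. Qed.

Lemma iter_inj j h r w w' : good j h -> vertex j w -> vertex j w' ->
  iter r h w = iter r h w' -> w = w'.
Proof.
move=> Hh Hw Hw'; have [hv _ _ hi] := good_iter r Hh; exact: hi.
Qed.

Fixpoint vlist j k : seq (seq L) :=
  if k is k'.+1 then [seq (Tagged X y : L) :: w | y <- enum (X j), w <- vlist j.+1 k']
  else [:: [::]].

Lemma vlistP j (w : seq L) : vertex j w -> w \in vlist j (size w).
Proof.
elim: w j => [|x w IH] j; first by rewrite /= inE.
move=> Hv; have [y ->] := vertex_cons Hv; move: Hv => /andP[_ Hw] /=.
apply: (allpairs_f (fun (y : X j) w => (Tagged X y : L) :: w)); first by rewrite mem_enum.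
exact: IH.
Qed.

Lemma orbit_exists j h (x : seq L) : good j h -> vertex j x ->
  exists l, orbit_len h x l /\ l <= size (vlist j (size x)).
Proof.
move=> Hh Hx; set N := size (vlist j (size x)).
have Hit i : vertex j (iter i h x) /\ size (iter i h x) = size x.
  case: (good_iter i Hh) => hv hs _ _; split; [exact: hv | exact: hs].
set s := [seq iter i h x | i <- iota 0 N.+1].
have : ~~ uniq s.
  apply/negP => Us; have := uniq_leq_size Us.
  have Hsub : {subset s <= vlist j (size x)}.
    move=> z /mapP[i _ ->]; have [H1 H2] := Hit i; rewrite -H2; exact: vlistP.
  by move=> /(_ _ Hsub); rewrite size_map size_iota ltnn.
case/(uniqPn x) => i [i' [lt_ii' lt_i's]]; rewrite size_map size_iota in lt_i's.
have lt_is : i < N.+1 by apply: ltn_trans lt_i's.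
rewrite !(nth_map 0) ?size_iota ?nth_iota //.
rewrite !add0n => Eii'.
have Hper : iter (i' - i) h x = x.
  apply: (@iter_inj j h i) => //; first by case: (Hit (i' - i)).
  by rewrite -iterD subnKC ?Eii' // ltnW.
have exP : exists n, (0 < n) && (iter n h x == x).
  by exists (i' - i); rewrite subn_gt0 lt_ii' Hper eqxx.
case: (ex_minnP exP) => l /andP[l_gt0 /eqP Hl] Hmin.
exists l; split.
  split=> // m /andP[m_gt0 lt_ml] Hm.
  by have := Hmin m; rewrite m_gt0 Hm eqxx => /(_ isT); rewrite leqNgt lt_ml.
have := Hmin (i' - i); rewrite subn_gt0 lt_ii' Hper eqxx => /(_ isT) H.
apply: leq_trans H _; lia.
Qed.

End Tree.


Section Tilde.
Variable X : nat -> finType.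
Local Notation L := (letter X).
Implicit Types (rho sig : forall n, {perm X n}) (o a b : forall n, X n) (w : seq L).

Definition actw rho w : seq L := if w is y :: w' then lett_act rho y :: w' else w.

Lemma tilde_cons rho o d j (x : L) w :
  tilde rho o d j (x :: w) =
  if x == Tagged X (o j) then x :: tilde rho o d j.+1 w
  else if x == Tagged X (d j) then x :: actw rho w else x :: w.
Proof. by []. Qed.

Lemma tilde_cons' rho o d j (x : L) w :
  tilde rho o d j (x :: w) = x ::
  (if x == Tagged X (o j) then tilde rho o d j.+1 w
  else if x == Tagged X (d j) then actw rho w else w).
Proof. by rewrite /=; case: ifP => //; case: ifP. Qed.

Lemma lett_fix rho (y : L) : rho (tag y) = 1 -> lett_act rho y = y.
Proof. by case: y => n y /= H; rewrite /lett_act /= H perm1. Qed.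

Lemma actw_fix rho n w : vertex n w -> rho n = 1 -> actw rho w = w.
Proof.
case: w => // y w /andP[/eqP Hy _] H /=; rewrite lett_fix //.
by rewrite Hy.
Qed.

Lemma actw_comp rho rho' w :
  actw rho (actw rho' w) = actw (fun n => rho' n * rho n) w.
Proof. by case: w => // y w /=; rewrite /lett_act /= permM. Qed.

Lemma actw_ext rho rho' w : (forall n, rho n = rho' n) -> actw rho w = actw rho' w.
Proof. by case: w => // y w H /=; rewrite /lett_act H. Qed.

Lemma actw_vertex rho n w : vertex n w -> vertex n (actw rho w).
Proof. by case: w. Qed.

Lemma actw_size rho w : size (actw rho w) = size w.
Proof. by case: w. Qed.

Lemma actw_take rho n w : actw rho (take n w) = take n (actw rho w).
Proof. by case: w => // y w; case: n. Qed.

Lemma actw_inj rho n w w' : vertex n w -> vertex n w' -> actw rho w = actw rho w' -> w = w'.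
Proof.
case: w => [|y w]; case: w' => [|y' w'] //= /andP[/eqP Hy _] /andP[/eqP Hy' _] [_ E2 ->].
congr (_ :: _).
move: E2; case: y Hy => m z /= Hm; case: y' Hy' => m' z' /= Hm'; subst.
by move=> E; have E2 := eq_from_Tagged E; rewrite (perm_inj E2).
Qed.

Lemma tilde_good rho o d j : good j (tilde rho o d j).
Proof.
split.
- move=> w; elim: w j => // x w IH j /andP[Hx Hw]; rewrite tilde_cons' /= Hx /=.
  by case: ifP => _; rewrite ?IH //; case: ifP => _ //; rewrite actw_vertex.
- move=> w _; elim: w j => // x w IH j; rewrite tilde_cons' /=.
  by case: ifP => _; rewrite ?IH //; case: ifP => _ //; rewrite actw_size.
- move=> w n _; elim: w j n => [|x w IH] j [|n] //.
    by rewrite tilde_cons'.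
  rewrite [take n.+1 (x :: w)]/= !tilde_cons' /=.
  by case: ifP => _; rewrite ?IH //; case: ifP => _ //; rewrite actw_take.
- move=> w; elim: w j => [|x w IH] j [|x' w'] //.
  + by rewrite tilde_cons'.
  + by rewrite tilde_cons'.
  move=> /andP[_ Hw] /andP[_ Hw'].
  rewrite !tilde_cons' => -[<-]; case: ifP => _; first by move/IH ->.
  by case: ifP => _; [move/(actw_inj Hw Hw') -> | move->].
Qed.

Lemma tilde_ext rho rho' o d j w : vertex j w -> (forall n, j < n -> rho n = rho' n) ->
  tilde rho o d j w = tilde rho' o d j w.
Proof.
elim: w j => // x w IH j /andP[_ Hw] H; rewrite !tilde_cons.
case: ifP => _; first by rewrite IH // => n Hn; apply: H; lia.
case: ifP => _ //; case: w Hw {IH} => // y w /andP[/eqP Hy _] /=.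
by rewrite /lett_act H // Hy.
Qed.

Lemma tilde_cat sig o d j u : vertex j u -> (forall n, j < n <= j + size u -> sig n = 1) ->
  (forall w, vertex (j + size u) w -> tilde sig o d j (u ++ w) = u ++ tilde sig o d (j + size u) w)
  \/ (forall w, vertex (j + size u) w -> tilde sig o d j (u ++ w) = u ++ w).
Proof.
elim: u j => [|x u IH] j; first by left => w _; rewrite addn0.
move=> /andP[/eqP Hx Hu] Hs; rewrite /= -addSnnS.
case Ho: (x == Tagged X (o j)).
  have Hs' : forall n, j.+1 < n <= j.+1 + size u -> sig n = 1.
    by move=> n Hn; apply: Hs; rewrite /=; lia.
  have [H|H] := IH j.+1 Hu Hs'; [left|right] => w Hw; by rewrite H.
case Hd: (x == Tagged X (d j)); right => w Hw; last by [].
case: u Hu {IH} Hs Hw => [|y u] Hu Hs Hw /=.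
  change (x :: actw sig w = x :: w); rewrite (actw_fix (n := j.+1)) //.
    by rewrite addn0 in Hw.
  by apply: Hs; rewrite /=; lia.
move: Hu => /andP[/eqP Hy _]; rewrite lett_fix //.
by rewrite Hy; apply: Hs; rewrite /=; lia.
Qed.

Lemma tilde_id sig o d j w : (forall n, j < n -> sig n = 1) -> vertex j w ->
  tilde sig o d j w = w.
Proof.
move=> H Hw; have Hs : forall n, j < n <= j + size w -> sig n = 1.
  by move=> n /andP[Hn _]; apply: H.
have [E|E] := tilde_cat o d Hw Hs.
  by move: (E [::] isT); rewrite /= !cats0.
by move: (E [::] isT); rewrite !cats0.
Qed.

Fixpoint D o a b rho sig j w : seq L :=
  match w with
  | [::] => [::]
  | x :: w' =>
      if x == Tagged X (o j) then x :: D o a b rho sig j.+1 w'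
      else if x == Tagged X (a j) then x :: actw rho w'
      else if x == Tagged X (b j) then x :: actw sig w'
      else x :: w'
  end.

Lemma D_ext o a b rho sig rho' sig' j w : (forall n, rho n = rho' n) -> (forall n, sig n = sig' n) ->
  D o a b rho sig j w = D o a b rho' sig' j w.
Proof.
move=> Hr Hs; elim: w j => //= x w IH j.
by rewrite IH (actw_ext _ Hr) (actw_ext _ Hs).
Qed.

Lemma D_comp o a b rho sig rho' sig' j w :
  D o a b rho sig j (D o a b rho' sig' j w) = D o a b (fun n => rho' n * rho n) (fun n => sig' n * sig n) j w.
Proof.
elim: w j => //= x w IH j.
case: ifP => Ho /=; rewrite ?Ho ?IH //.
case: ifP => Ha /=; rewrite ?Ho ?Ha ?actw_comp //.
by case: ifP => Hb /=; rewrite ?Ho ?Ha ?Hb ?actw_comp.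
Qed.

Lemma D_one o a b j w : D o a b (fun n => 1) (fun n => 1) j w = w.
Proof.
elim: w j => //= x w IH j.
have A : actw (fun n => 1) w = w by case: w {IH} => // y w /=; rewrite lett_fix.
by rewrite IH A; case: ifP => //; case: ifP => //; case: ifP.
Qed.

Lemma iter_D o a b rho sig j t w :
  iter t (D o a b rho sig j) w = D o a b (fun n => rho n ^+ t) (fun n => sig n ^+ t) j w.
Proof.
elim: t => [|t IH] /=; first by rewrite (D_ext _ _ _ (rho' := fun n => 1) (sig' := fun n => 1)) ?D_one.
by rewrite IH D_comp; apply: D_ext => n; rewrite expgSr.
Qed.

Hypothesis HS : True.

Lemma QG_D o a b rho sig j w :
  (forall n, j <= n -> [/\ a n != b n, a n != o n & b n != o n]) -> vertex j w ->
  tilde rho o a j (tilde sig o b j w) = D o a b rho sig j w.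
Proof.
elim: w j => // x w IH j Hn Hv; have [y Ey] := vertex_cons Hv; move: Hv => /andP[_ Hw]; subst x.
have [Hab Hao Hbo] := Hn j (leqnn j).
rewrite [tilde sig o b j _]tilde_cons' tilde_cons' /= !tagged_eq.
case: (eqVneq y (o j)) => [Eo|No].
  by rewrite IH // => n Hn'; apply: Hn; lia.
case: (eqVneq y (b j)) => [Eb|Nb].
  have Hba : (b j == a j) = false by rewrite eq_sym; exact: negbTE.
  by rewrite Eb Hba.
by case: (y == a j).
Qed.

Lemma D_triv o a b rho sig j w : 0 < j ->
  (forall n, 0 < n -> a n != b n) -> (forall n, 0 < n -> rho n = 1) -> vertex j w ->
  D o a b rho sig j w = tilde sig o b j w.
Proof.
elim: w j => // x w IH j Hj Hab Hr Hv; have [y Ey] := vertex_cons Hv; move: Hv => /andP[_ Hw].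
rewrite tilde_cons /= !Ey !tagged_eq.
case: (eqVneq y (o j)) => [Eo|No] /=; first by rewrite IH.
case: (eqVneq y (a j)) => [Ea|Na] /=; last by [].
rewrite Ea (negbTE (Hab j Hj)) (actw_fix (n := j.+1)) //; exact: Hr.
Qed.

Lemma permL_T j (p : {perm X j}) (y : X j) : permL p (Tagged X y) = Tagged X (p y).
Proof.
rewrite /permL /=; case: eqP => [e|//].
by rewrite (eq_irrelevance e (erefl j)).
Qed.

Lemma rooted_good j (p : {perm X j}) : good j (rooted p).
Proof.
split.
- case=> // x w Hv; have [y Ey] := vertex_cons Hv; move: Hv => /andP[_ Hw].
  by rewrite Ey /= permL_T /= eqxx.
- by case.
- by case=> [|x w] [|n].
- case=> [|x w] [|x' w'] //= Hv Hv'.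
  have [y ->] := vertex_cons Hv; have [y' ->] := vertex_cons Hv'.
  by rewrite !permL_T => -[E ->]; rewrite (perm_inj (eq_from_Tagged E)).
Qed.

Lemma iter_rooted j (p : {perm X j}) t w : vertex j w -> iter t (rooted p) w = rooted (p ^+ t) w.
Proof.
case: w => [|x w] Hv; first by elim: t => //= t ->.
have [y ->] := vertex_cons Hv.
elim: t => [|t IH] /=; first by rewrite permL_T expg0 perm1.
by rewrite IH /= !permL_T expgSr permM.
Qed.

Lemma rooted_one j w : rooted (1 : {perm X j}) w = w.
Proof.
case: w => // x w /=; rewrite /permL; case: eqP => // e.
by case: x e => n y /= e; subst; rewrite perm1.
Qed.

End Tilde.


Lemma hom_one (G : groupType) (Y : finType) (f : G -> {perm Y}) :
  (forall x y, f (x * y) = f x * f y) -> f 1 = 1.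
Proof. by move=> H; apply: (mulgI (f 1)); rewrite -H !mulg1. Qed.

Lemma hom_exp (G : groupType) (Y : finType) (f : G -> {perm Y}) x t :
  (forall x y, f (x * y) = f x * f y) -> f (x ^+ t) = f x ^+ t.
Proof.
move=> H; elim: t => [|t IH]; first by rewrite !expg0 hom_one.
by rewrite !expgS H IH.
Qed.

Lemma exp_card (T : finGroupType) (p : T) t : #|T| %| t -> p ^+ t = 1.
Proof.
case/dvdnP => c ->; rewrite mulnC expgM.
by rewrite -cardsT expg_cardG ?in_setT // expg1n.
Qed.

Fixpoint PE (X : nat -> finType) n :=
  if n is n'.+1 then (#|{perm X n}| * PE X n')%N else #|{perm X 0}|.

Lemma PE_dvd X n N : n <= N -> #|{perm X n}| %| PE X N.
Proof.
elim: N => [|N IH]; first by rewrite leqn0 => /eqP ->.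
rewrite leq_eqVlt => /orP[/eqP ->|]; first exact: dvdn_mulr.
by move=> H; apply: dvdn_mull; apply: IH.
Qed.

Lemma PE_gt0 X N : 0 < PE X N.
Proof.
elim: N => [|N IH] /=; first by apply/card_gt0P; exists 1.
by rewrite muln_gt0 IH andbT; apply/card_gt0P; exists 1.
Qed.

Unset Implicit Arguments.
Set Strict Implicit.

Theorem lemma2p4 (X : nat -> finType) (Q : finGroupType) (G : groupType)
    (qa : forall n, Q -> {perm X n}) (ga : forall n, G -> {perm X n})
    (o alpha beta : forall n, X n) :
  setting qa ga ->
  inS o alpha -> inS o beta ->
  shrinking qa ga o alpha beta ->
  forall gamma, Gamma1 qa ga o alpha beta gamma ->
  exists K, forall k, K <= k ->
    exists m, 0 < m /\
      (forall v, vertex 1 v -> size v = k -> autpow gamma m v = v) /\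
      (forall v, vertex 1 v -> size v = k ->
         inGtil ga o beta k.+1 (sect (autpow gamma m) v)).
Proof.
move=> [_ [Hqh [Hgh _]]] HinSa HinSb [Hab Hshr] gamma Hgam.
have Hgood : good 1 gamma.
  apply: gen_good Hgam => s [[a _ ->]|[[q ->]|[g ->]]];
    [exact: rooted_good | exact: tilde_good | exact: tilde_good].
have [k [k_gt0 Hk]] := Hshr gamma Hgam.
exists k => k' Hkk'.
set N := size (vlist X 1 k).
set E := PE X k'.+1.
set m := (N`! * (#|Q| * E))%N.
have Q_gt0 : 0 < #|Q| by apply/card_gt0P; exists 1.
have key : forall v, vertex 1 v -> size v = k' -> exists g0 : G, forall w,
    vertex k'.+1 w -> iter m gamma (v ++ w) = v ++ Gtil ga o beta k'.+1 g0 w.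
  move=> v Hv Hs.
  set x := take k v; set u := drop k v.
  have Ev : v = x ++ u by rewrite cat_take_drop.
  have Hsx : size x = k by rewrite size_takel // Hs.
  have Hsu : size u = k' - k by rewrite size_drop Hs.
  move: Hv; rewrite Ev vertex_cat Hsx add1n => /andP[Hx Hu].
  have [l [Hl Hlle]] := orbit_exists Hgood Hx; rewrite Hsx -/N in Hlle.
  have Hl' := Hl; case: Hl' => l_gt0 Hfix _.
  have HF := Hk x l Hx Hsx Hl.
  have ldvd : l %| N`! by apply: dvdn_fact; rewrite l_gt0.
  set t := (N`! %/ l * (#|Q| * E))%N.
  have Em : m = (t * l)%N by rewrite /t mulnAC divnK.
  have tQ : #|Q| %| t by rewrite /t mulnA dvdn_mulr // dvdn_mull.
  have tE : E %| t by rewrite /t dvdn_mull // dvdn_mull.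
  have tP : forall n, n <= k'.+1 -> #|{perm X n}| %| t.
    by move=> n Hn; apply: dvdn_trans tE; apply: PE_dvd.
  have Hsv : forall z, vertex k.+1 z -> vertex k.+1 (sect (iter l gamma) x z).
    move=> z Hz; have := good_sect_vertex (good_iter l Hgood) Hx (v := z).
    by rewrite Hsx add1n; apply.
  have Hku : k.+1 + size u = k'.+1 by rewrite Hsu; lia.
  suff [g0 Hg0] : exists g0 : G, forall w, vertex k'.+1 w ->
      iter t (sect (iter l gamma) x) (u ++ w) = u ++ Gtil ga o beta k'.+1 g0 w.
    exists g0 => w Hw.
    have Huw : vertex (1 + size x) (u ++ w) by rewrite Hsx add1n vertex_cat Hu Hku.
    rewrite Em iterM -catA.
    have [-> _] := iter_fix_cat t (good_iter l Hgood) Hx Hfix Huw.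
    by rewrite Hg0 // catA.
  have Gone : forall w, vertex k'.+1 w -> Gtil ga o beta k'.+1 1 w = w.
    move=> w Hw; apply: tilde_id Hw => n Hn; apply: hom_one; apply: Hgh; lia.
  case: HF => [[q [g Hqg]]|[a _ Ha]].
  - have EQ : aut_eq k.+1 (sect (iter l gamma) x)
        (D o alpha beta (fun n => qa n q) (fun n => ga n g) k.+1).
      move=> z Hz; rewrite (Hqg z Hz) /= /Qtil /Gtil QG_D //.
      move=> n Hn; have Hn0 : 0 < n by lia.
      by split; [apply: Hab | apply: HinSa | apply: HinSb].
    have E1 : forall z, vertex k.+1 z -> iter t (sect (iter l gamma) x) z =
        tilde (fun n => ga n g ^+ t) o beta k.+1 z.
      move=> z Hz; rewrite (iter_eqv t Hsv EQ Hz) iter_D D_triv //.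
      move=> n Hn; rewrite -hom_exp; last exact: Hqh.
      by rewrite exp_card // hom_one //; apply: Hqh.
    have Hsig : forall n, k.+1 < n <= k.+1 + size u -> ga n g ^+ t = 1.
      by move=> n Hn; apply: exp_card; apply: tP; lia.
    have [H|H] := tilde_cat o beta Hu Hsig.
      exists (g ^+ t) => w Hw; rewrite E1; last by rewrite vertex_cat Hu Hku.
      rewrite H ?Hku // /Gtil; congr (_ ++ _); apply: tilde_ext => // n Hn.
      by rewrite hom_exp //; apply: Hgh; lia.
    exists 1 => w Hw; rewrite E1; last by rewrite vertex_cat Hu Hku.
    by rewrite H ?Hku // Gone.
  - exists 1 => w Hw.
    have Huw : vertex k.+1 (u ++ w) by rewrite vertex_cat Hu Hku.
    rewrite (iter_eqv t Hsv Ha Huw) iter_rooted // exp_card ?rooted_one ?Gone //.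
    by apply: tP; lia.
exists m; split; first by rewrite /m muln_gt0 fact_gt0 muln_gt0 Q_gt0 /=; apply: PE_gt0.
split.
- move=> v Hv Hs; have [g0 H] := key v Hv Hs.
  by move: (H [::] isT); rewrite cats0 /autpow => ->; rewrite /Gtil /= ?cats0.
- move=> v Hv Hs; have [g0 H] := key v Hv Hs.
  by exists g0 => w Hw; rewrite /sect /autpow H // drop_size_cat.
Qed.
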